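(* Let $\mathcal X$ be a real normed space and $\mathcal Y$ a normed space. Let $c:\mathcal X\to\mathcal Y$ be an orthogonally constant mapping. If $x,y\in\mathcal X$ satisfy $\|x\|=\|y\|$, then $c(x)=c(y)$.
   Context: For $x,y$ in a real normed space $\mathcal X$, isosceles orthogonality is defined by $x\perp y$ if and only if $\|x+y\|=\|x-y\|$. A mapping $c:\mathcal X\to\mathcal Y$ is called orthogonally constant if $c(x+y)=c(x-y)$ for all $x,y\in\mathcal X$ with $x\perp y$. *)

(* Defs.v *)
From HB Require Import structures.
From mathcomp Require Import all_boot all_order all_algebra.
From mathcomp Require Import all_classical all_reals all_analysis.
Set Implicit Arguments. Unset Strict Implicit. Unset Printing Implicit Defensive.
Import Order.TTheory GRing.Theory Num.Theory.
Local Open Scope ring_scope.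

Definition iso_orth (R : realType) (X : normedModType R) (x y : X) : Prop :=
  `|x + y| = `|x - y|.

Definition orth_constant (R : realType) (X : normedModType R) (Y : Type)
  (c : X -> Y) : Prop :=
  forall x y : X, iso_orth x y -> c (x + y) = c (x - y).

(* Main.v *)
Require Import Defs.
From HB Require Import structures.
From mathcomp Require Import all_boot all_order all_algebra.
From mathcomp Require Import all_classical all_reals all_analysis.
Import Order.TTheory GRing.Theory Num.Theory.
Local Open Scope ring_scope.

Theorem lemma2p2 (R : realType) (X : normedModType R) (Y : normedModType R)
  (c : X -> Y) (hc : orth_constant c) (x y : X) (hxy : `|x| = `|y|) :
  c x = c y.
Proof.
have two : (2:R) != 0 by rewrite pnatr_eq0.
pose u : X := 2^-1 *: (x + y).
pose v : X := 2^-1 *: (x - y).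
have Ex : u + v = x.
  by rewrite /u /v -scalerDr addrACA subrr addr0 -mulr2n -(scaler_nat 2 x) scalerA mulVf ?scale1r.
have Ey : u - v = y.
  rewrite /u /v -scalerBr opprB addrC addrA subrK.
  by rewrite -mulr2n -(scaler_nat 2 y) scalerA mulVf ?scale1r.
rewrite -{1}Ex -{1}Ey; apply: hc.
by rewrite /iso_orth Ex Ey.
Qed.
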